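(* Let $X$ be a Banach space, $C\subset X$ a nonempty generalized polyhedral convex set, and $f(x)=\frac12\langle Mx,x\rangle+\langle q,x\rangle+\alpha$, where $M:X\to X^*$ is a bounded linear operator which is symmetric ($\langle Mx,y\rangle=\langle My,x\rangle$ for all $x,y\in X$), $q\in X^*$, $\alpha\in\mathbb R$. If $\bar x$ is a local minimum of $\min\{f(x)\mid x\in C\}$, then: (c0) $\langle M\bar x+q,v\rangle\ge0$ for all $v\in T_C(\bar x)$; (c1') for every $v\in T_C(\bar x)$ with $\langle M\bar x+q,v\rangle=0$, one has $\langle M\bar x+q,w\rangle\ge0$ for all $w\in T^2_C(\bar x,v)$; (c2') $\langle Mv,v\rangle\ge 0$ for all $v\in T_C(\bar x)$ with $\langle M\bar x+q,v\rangle=0$. *)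

(* Defs.v *)
From HB Require Import structures.
From mathcomp Require Import all_boot all_order all_algebra.
From mathcomp Require Import all_classical all_reals all_analysis.
Set Implicit Arguments. Unset Strict Implicit. Unset Printing Implicit Defensive.
Import Order.TTheory GRing.Theory Num.Theory.
Import numFieldNormedType.Exports.
Local Open Scope classical_set_scope.
Local Open Scope ring_scope.

Section Defs.
Context {R : realType} {X : normedModType R}.

Definition lin_functional (f : X -> R) : Prop :=
  forall (a : R) (x y : X), f (a *: x + y) = a * f x + f y.

Definition dual_elem (f : X -> R) : Prop := lin_functional f /\ continuous f.

Definition closed_affine_subspace (L : set X) : Prop :=
  closed L /\ L !=set0 /\
  forall (x y : X) (t : R), L x -> L y -> L ((1 - t) *: x + t *: y).

Definition gen_polyhedral_convex (C : set X) : Prop :=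
  exists (p : nat) (xs : 'I_p -> X -> R) (a : 'I_p -> R) (L : set X),
    (forall i, dual_elem (xs i)) /\ closed_affine_subspace L /\
    C = [set x | L x /\ forall i, xs i x <= a i].

Definition tangent_cone (C : set X) (xb : X) : set X :=
  [set v | exists (t : nat -> R) (vs : nat -> X),
      (forall k, 0 < t k) /\ t @ \oo --> 0 /\ vs @ \oo --> v /\
      (forall k, C (xb + t k *: vs k))].

Definition second_tangent_set (C : set X) (xb v : X) : set X :=
  [set w | exists (t : nat -> R) (ws : nat -> X),
      (forall k, 0 < t k) /\ t @ \oo --> 0 /\ ws @ \oo --> w /\
      (forall k, C (xb + t k *: v + (2^-1 * t k ^+ 2) *: ws k))].

Definition local_min_on (f : X -> R) (C : set X) (xb : X) : Prop :=
  C xb /\ exists2 e : R, 0 < e & forall x, C x -> ball xb e x -> f xb <= f x.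

End Defs.

(* Main.v *)
Require Import Defs.
From HB Require Import structures.
From mathcomp Require Import all_boot all_order all_algebra.
From mathcomp Require Import all_classical all_reals all_analysis.
From mathcomp Require Import ring lra.
Import Order.TTheory GRing.Theory Num.Theory.
Import numFieldNormedType.Exports.
Local Open Scope classical_set_scope.
Local Open Scope ring_scope.
Section Lin.
Context {R : realType} {X : normedModType R}.

Lemma lin0 (f : X -> R) : lin_functional f -> f 0 = 0.
Proof.
move=> lf; have := lf 1 0 0; rewrite scale1r addr0 mul1r => h.
by have := congr1 (fun z => z - f 0) h; rewrite /= subrr addrK.
Qed.

Lemma linD (f : X -> R) : lin_functional f -> forall x y, f (x + y) = f x + f y.
Proof. by move=> lf x y; rewrite -[x in LHS]scale1r lf mul1r. Qed.

Lemma linZ (f : X -> R) : lin_functional f -> forall a x, f (a *: x) = a * f x.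
Proof. by move=> lf a x; rewrite -[_ *: _]addr0 lf lin0 // addr0. Qed.

Lemma H1 (a b : R) : (\forall s \near 0^'+, 0 <= s * a + s ^+ 2 * b) -> 0 <= a.
Proof.
move=> h; rewrite leNgt; apply/negP => a0.
have e0 : 0 < - a / (`|b| + 1) by rewrite divr_gt0 // ?oppr_gt0 // ltr_wpDl.
have : \forall s \near 0^'+, [/\ 0 < s, s < - a / (`|b| + 1) & 0 <= s * a + s ^+ 2 * b].
  near=> s; split; [near: s; exact: nbhs_right_gt | near: s; exact: nbhs_right_lt | near: s; exact: h].
move=> /filter_ex [s [s0 se hs]].
move: se; rewrite ltr_pdivlMr ?ltr_wpDl // => se.
have hb : b <= `|b| := ler_norm b.
have hb0 : 0 <= `|b| := normr_ge0 b.
move: hs; rewrite leNgt => /negP; apply.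
nra.
Unshelve. all: by end_near.
Qed.

Lemma seq_le0 (u : nat -> R) l : (forall k, u k <= 0) -> u @ \oo --> l -> l <= 0.
Proof.
move=> h ul.
have hn : \forall k \near \oo, 0 >= u k by apply: nearW => k; exact: h.
have := limr_le (cvgP _ ul) hn.
rewrite (cvg_lim _ ul); last exact: Rhausdorff.
by apply; exact: _.
Qed.

End Lin.
Section Poly.
Context {R : realType} {X : normedModType R}.
Variables (L : set X) (xb : X).
Hypothesis Lcl : closed_affine_subspace L.
Hypothesis Lxb : L xb.

Definition Ddir (d : X) := forall s : R, L (xb + s *: d).

Lemma Lline y : L (xb + y) -> Ddir y.
Proof.
move=> Ly s; case: Lcl => _ [_ aff].
have := aff _ _ s Lxb Ly.
by rewrite scalerDr addrA -scalerDl subrK scale1r.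
Qed.

Lemma DZ c d : Ddir d -> Ddir (c *: d).
Proof. by move=> Dd s; rewrite scalerA. Qed.

Lemma DD u w : Ddir u -> Ddir w -> Ddir (u + w).
Proof.
move=> Du Dw s; case: Lcl => _ [_ aff].
have := aff _ _ (2^-1) (Du (2 * s)) (Dw (2 * s)).
have -> : 1 - 2^-1 = 2^-1 :> R by field.
rewrite !scalerDr !scalerA mulrA mulVf ?pnatr_eq0 // mul1r.
rewrite addrACA -scalerDl. have -> : (2^-1 + 2^-1 : R) = 1 by field.
by rewrite scale1r.
Qed.

Lemma Dclosed (u : nat -> X) w : (forall k, Ddir (u k)) -> u @ \oo --> w -> Ddir w.
Proof.
move=> Du uw s; case: Lcl => cl _.
apply: (@closed_cvg _ _ \oo _ (fun k => xb + s *: u k) L cl); first by apply: nearW => k; exact: Du.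
apply: cvgD; first exact: cvg_cst.
by apply: cvgZ => //; exact: cvg_cst.
Qed.

End Poly.
Arguments Lline {R X L xb}.
Arguments DZ {R X L xb}.
Arguments DD {R X L xb}.
Arguments Dclosed {R X L xb}.
Section Main.
Context {R : realType} {X : normedModType R}.
Variables (p : nat) (xs : 'I_p -> X -> R) (a : 'I_p -> R) (L : set X) (xb : X).
Hypothesis hxs : forall i, dual_elem (xs i).
Hypothesis Lcl : closed_affine_subspace L.
Hypothesis Lxb : L xb.
Let C := [set x | L x /\ forall i, xs i x <= a i].

Lemma tangent_props v : tangent_cone C xb v ->
  Ddir L xb v /\ forall i, xs i xb = a i -> xs i v <= 0.
Proof.
move=> [t [vs [t0 [tc [vc Cv]]]]]; split.
  apply: (Dclosed Lcl _ _ _ vc) => k.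
  have := DZ (t k)^-1 _ (Lline Lcl Lxb _ (Cv k).1).
  by rewrite scalerA mulVf ?gt_eqF // scale1r.
move=> i act.
have [li ci] := hxs i.
apply: (@seq_le0 R (fun k => xs i (vs k))); last exact: (continuous_cvg _ (ci v) vc).
  move=> k /=.
  have := (Cv k).2 i; rewrite (linD _ li) (linZ _ li) act gerDl => h.
  by rewrite -(pmulr_rle0 _ (t0 k)).
Qed.

Lemma tangent2_props v w : Ddir L xb v -> second_tangent_set C xb v w ->
  Ddir L xb w /\ forall i, xs i xb = a i -> xs i v = 0 -> xs i w <= 0.
Proof.
move=> Dv [t [ws [t0 [tc [wc Cw]]]]].
have c0 k : 0 < 2^-1 * t k ^+ 2 by rewrite mulr_gt0 ?exprn_gt0.
split.
  apply: (Dclosed Lcl _ _ _ wc) => k.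
  have h1 := Lline Lcl Lxb _ (eq_ind _ L (Cw k).1 _ (esym (addrA _ _ _))).
  have h2 := DD Lcl _ _ h1 (DZ (- t k) _ Dv).
  have h3 := DZ (2^-1 * t k ^+ 2)^-1 _ h2.
  move: h3; rewrite scaleNr addrAC subrr add0r scalerA mulVf ?gt_eqF // scale1r.
  done.
move=> i act v0.
have [li ci] := hxs i.
apply: (@seq_le0 R (fun k => xs i (ws k))); last exact: (continuous_cvg _ (ci w) wc).
  move=> k /=.
  have := (Cw k).2 i; rewrite !(linD _ li) !(linZ _ li) act v0 mulr0 addr0 gerDl => h.
  by rewrite -(pmulr_rle0 _ (c0 k)).
Qed.

Lemma feasible d : Ddir L xb d -> (forall i, xs i xb = a i -> xs i d <= 0) ->
  (forall i, xs i xb <= a i) -> \forall s \near 0^'+, C (xb + s *: d).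
Proof.
move=> Dd act cxb.
near=> s; split; first exact: Dd.
near: s; apply: filter_forall => i.
have [li ci] := hxs i.
have [e|ne] := eqVneq (xs i xb) (a i).
  near=> s.
  have s0 : 0 < s by near: s; exact: nbhs_right_gt.
  have := act i e.
  rewrite (linD _ li) (linZ _ li) e; nra.
have lt : xs i xb < a i by rewrite lt_neqAle ne cxb.
have del0 : 0 < a i - xs i xb by rewrite subr_gt0.
near=> s.
have s0 : 0 < s by near: s; exact: nbhs_right_gt.
have se : s < (a i - xs i xb) / (`|xs i d| + 1).
  by near: s; apply: nbhs_right_lt; rewrite divr_gt0 // ltr_wpDl.
have hp : 0 < `|xs i d| + 1 by rewrite ltr_wpDl.
move: se; rewrite ltr_pdivlMr // => se.
have := ler_norm (xs i d); have := normr_ge0 (xs i d).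
rewrite (linD _ li) (linZ _ li); nra.
Unshelve. all: by end_near.
Qed.

End Main.
Arguments tangent_props {R X p xs a L xb}.
Arguments tangent2_props {R X p xs a L xb}.

Lemma near_ball {R : realType} {X : normedModType R} (xb d : X) (e : R) :
  0 < e -> \forall s \near 0^'+, ball xb e (xb + s *: d).
Proof.
move=> e0; near=> s.
have s0 : 0 < s by near: s; exact: nbhs_right_gt.
have se : s < e / (`|d| + 1).
  by near: s; apply: nbhs_right_lt; rewrite divr_gt0 // ltr_wpDl.
have hp : 0 < `|d| + 1 by rewrite ltr_wpDl.
move: se; rewrite ltr_pdivlMr // => se.
rewrite -ball_normE /ball_ /= opprD addrA subrr add0r normrN normrZ gtr0_norm //.
have := normr_ge0 d; nra.
Unshelve. all: by end_near.
Qed.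

(* M x y stands for <M x, y>; M : X -> X^* bounded linear and symmetric. *)
Theorem theorem3p4 (R : realType) (X : completeNormedModType R)
  (C : set X) (M : X -> X -> R) (q : X -> R) (alpha : R) (xb : X) :
  C !=set0 ->
  gen_polyhedral_convex C ->
  (forall x, dual_elem (M x)) ->
  (forall (a : R) (x1 x2 y : X), M (a *: x1 + x2) y = a * M x1 y + M x2 y) ->
  (exists c : R, forall x y, `|M x y| <= c * `|x| * `|y|) ->
  (forall x y, M x y = M y x) ->
  dual_elem q ->
  let f := fun x => 2^-1 * M x x + q x + alpha in
  local_min_on f C xb ->
  (forall v, tangent_cone C xb v -> 0 <= M xb v + q v) /\
  (forall v, tangent_cone C xb v -> M xb v + q v = 0 ->
     forall w, second_tangent_set C xb v w -> 0 <= M xb w + q w) /\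
  (forall v, tangent_cone C xb v -> M xb v + q v = 0 -> 0 <= M v v).
Proof.
move=> _ [p [xs [a [L [hxs [Lcl ->]]]]]] hM Mlin1 _ Msym hq f [[Lxb cxb] [e e0 hmin]].
have M0 z : M 0 z = 0.
  have := Mlin1 1 0 0 z; rewrite scale1r addr0 mul1r => h.
  by have := congr1 (fun u => u - M 0 z) h; rewrite /= subrr addrK.
have M1D x y z : M (x + y) z = M x z + M y z by rewrite -[x in LHS]scale1r Mlin1 mul1r.
have M1Z c x z : M (c *: x) z = c * M x z by rewrite -[_ *: _]addr0 Mlin1 M0 addr0.
have M2D x y z : M x (y + z) = M x y + M x z := linD _ (hM x).1 y z.
have M2Z x c z : M x (c *: z) = c * M x z := linZ _ (hM x).1 c z.
have qD := linD _ hq.1; have qZ := linZ _ hq.1.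
have hexp dd ss : f (xb + ss *: dd) - f xb =
    ss * (M xb dd + q dd) + ss ^+ 2 * (2^-1 * M dd dd).
  rewrite /f M1D !M2D !M1Z !M2Z (Msym dd xb) qD qZ; by field.
have key d : Ddir L xb d -> (forall i, xs i xb = a i -> xs i d <= 0) ->
    \forall s \near 0^'+, 0 <= s * (M xb d + q d) + s ^+ 2 * (2^-1 * M d d).
  move=> Dd ad.
  have hF : \forall s \near 0^'+,
      [set x | L x /\ forall i, xs i x <= a i] (xb + s *: d) by exact: feasible.
  have hB := near_ball xb d e e0.
  apply: (filterS2 _ _ hF hB) => s Cs Bs.
  by rewrite -hexp subr_ge0; apply: hmin.
have ked d : Ddir L xb d -> (forall i, xs i xb = a i -> xs i d <= 0) ->
    0 <= M xb d + q d.
  by move=> Dd ad; exact: H1 (key d Dd ad).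
split.
  by move=> v /(tangent_props hxs Lcl Lxb) [Dv av]; exact: ked.
split.
  move=> v /(tangent_props hxs Lcl Lxb) [Dv av] gv w /(tangent2_props hxs Lcl Lxb _ _ Dv) [Dw aw].
  pose lam := \sum_(i < p) `|xs i w / xs i v|.
  have := ked (w + lam *: v) (DD Lcl _ _ Dw (DZ lam _ Dv)).
  have -> : M xb (w + lam *: v) + q (w + lam *: v) = M xb w + q w + lam * (M xb v + q v).
    rewrite M2D M2Z qD qZ; by field.
  rewrite gv mulr0 addr0; apply => i act.
  have [li ci] := hxs i.
  rewrite (linD _ li) (linZ _ li).
  have := av i act.
  have [xv0|xvn] := eqVneq (xs i v) 0.
    by rewrite xv0 mulr0 addr0 => _; exact: aw.
  move=> xvle.
  have xvlt : xs i v < 0 by rewrite lt_neqAle xvn xvle.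
  have hl : `|xs i w / xs i v| <= lam.
    by rewrite /lam (bigD1 i) //= lerDl sumr_ge0.
  have hr : xs i w = (xs i w / xs i v) * xs i v by rewrite divfK // lt_eqF.
  move: hl hr; set r := xs i w / xs i v => hl hr.
  have := ler_norm (- r); rewrite normrN => hn.
  rewrite hr; nra.
move=> v /(tangent_props hxs Lcl Lxb) [Dv av] gv.
have := key v Dv av; rewrite gv => h.
have : \forall s \near 0^'+, 0 < s /\ 0 <= s * 0 + s ^+ 2 * (2^-1 * M v v).
  by apply: (filterS2 _ _ (nbhs_right_gt 0) h) => s s0 hs; split.
move=> /filter_ex [s [s0]].
rewrite mulr0 add0r pmulr_rge0 ?exprn_gt0 // pmulr_rge0 // invr_gt0.
Qed.
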